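(* Let $(T,\leq)$ be an ordered set and let $T^\ast$ be its ultrapower with respect to an ultrafilter $\mathcal{U}$ on $\mathbb{N}$. Then $T^\ast$ is complete (every nonempty subset of $T^\ast$ that is bounded from above has a least upper bound) if and only if $T$ is finite.
   Context: An ordered set is a nonempty set with a reflexive, antisymmetric, transitive and linear (total) relation $\leq$. An ultrafilter on $\mathbb{N}$ is a nonempty family $\mathcal{U}$ of subsets of $\mathbb{N}$ such that: (1) $K \in \mathcal{U}$, $K \subset L \subset \mathbb{N}$ imply $L \in \mathcal{U}$; (2) $K,L \in \mathcal{U}$ imply $K\cap L \in \mathcal{U}$; (3) every $K \in \mathcal{U}$ is infinite; (4) for every $K \subset \mathbb{N}$, $K \in \mathcal{U}$ or $\mathbb{N}\setminus K \in \mathcal{U}$. The ultrapower $T^\ast$: on the set $\mathcal{T}$ of all sequences $(a_n):\mathbb{N}\to T$ define $(a_n)\sim(b_n)$ iff $\{n : a_n = b_n\} \in \mathcal{U}$; this is an equivalence relation, $T^\ast$ is the set of its classes, $\overline{(a_n)}$ denotes the class of $(a_n)$, and $T^\ast$ is ordered by $\overline{(a_n)} \leq \overline{(b_n)}$ iff $\{ n : a_n \leq b_n\} \in \mathcal{U}$ (a well-defined total order). *)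

(* Defs.v *)
From Stdlib Require List.
From mathcomp Require Import all_boot all_order.
Set Implicit Arguments. Unset Strict Implicit. Unset Printing Implicit Defensive.
Import Order.TTheory.
Local Open Scope order_scope.

Definition finite_type (T : Type) : Prop :=
  exists l : list T, forall x : T, Stdlib.Lists.List.In x l.

Definition finite_natset (K : nat -> Prop) : Prop :=
  exists l : list nat, forall k : nat, K k -> Stdlib.Lists.List.In k l.

Definition is_ultrafilter (U : (nat -> Prop) -> Prop) : Prop :=
  (exists K, U K) /\
  (forall K L : nat -> Prop, U K -> (forall n, K n -> L n) -> U L) /\
  (forall K L : nat -> Prop, U K -> U L -> U (fun n => K n /\ L n)) /\
  (forall K : nat -> Prop, U K -> ~ finite_natset K) /\
  (forall K : nat -> Prop, U K \/ U (fun n => ~ K n)).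

Section Ultrapower.
Context {d : Order.disp_t} (T : orderType d) (U : (nat -> Prop) -> Prop).

Definition useq_equiv (a b : nat -> T) : Prop := U (fun n => a n = b n).

Definition uclass (a : nat -> T) : (nat -> T) -> Prop := fun b => useq_equiv a b.

Definition ultrapower : Type :=
  { S : (nat -> T) -> Prop | exists a : nat -> T, S = uclass a }.

Definition ultrapower_le (x y : ultrapower) : Prop :=
  exists a b : nat -> T, proj1_sig x = uclass a /\ proj1_sig y = uclass b /\
    U (fun n => a n <= b n).

Definition ultrapower_complete : Prop :=
  forall A : ultrapower -> Prop,
    (exists x, A x) ->
    (exists u, forall x, A x -> ultrapower_le x u) ->
    exists l, (forall x, A x -> ultrapower_le x l) /\
      (forall u, (forall x, A x -> ultrapower_le x u) -> ultrapower_le l u).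
End Ultrapower.

(* Main.v *)
Require Import Defs.
From mathcomp Require Import all_boot all_order.
From Stdlib Require Import Classical ClassicalEpsilon FunctionalExtensionality PropExtensionality ProofIrrelevance Lia.
From Stdlib Require List.
Set Implicit Arguments. Unset Strict Implicit.
Import Order.TTheory.
Local Open Scope order_scope.

Lemma U_const (U : (nat -> Prop) -> Prop) (P : Prop) :
  is_ultrafilter U -> U (fun _ => P) -> P.
Proof.
move=> [_ [Uup [_ [Ufin _]]]] H; apply: NNPP => nP.
apply: (Ufin (fun _ => P)) => //; exists nil => k /=; exact: nP.
Qed.

Lemma U_up (U : (nat -> Prop) -> Prop) (K L : nat -> Prop) :
  is_ultrafilter U -> U K -> (forall n, K n -> L n) -> U L.
Proof. by move=> [_ [Uup _]]; apply: Uup. Qed.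

Lemma U_int (U : (nat -> Prop) -> Prop) (K L : nat -> Prop) :
  is_ultrafilter U -> U K -> U L -> U (fun n => K n /\ L n).
Proof. by move=> [_ [_ [Uint _]]]; apply: Uint. Qed.

Lemma U_true (U : (nat -> Prop) -> Prop) (L : nat -> Prop) :
  is_ultrafilter U -> (forall n, L n) -> U L.
Proof. move=> hU H; case: (hU) => [[K UK] _]; apply: (U_up hU UK) => n _; exact: H. Qed.

Lemma U_cof (U : (nat -> Prop) -> Prop) (k : nat) :
  is_ultrafilter U -> U (fun n => (k <= n)%N).
Proof.
move=> hU; case: (hU) => [_ [_ [_ [Ufin Ucomp]]]].
case: (Ucomp (fun n => (n < k)%N)) => H.
  exfalso; apply: (Ufin _ H); exists (List.seq 0 k) => n hn.
  apply/List.in_seq; move/ssrnat.ltP: hn; lia.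
apply: (U_up hU H) => n /= /negP; rewrite -leqNgt; done.
Qed.

Definition cls d (T : orderType d) U (a : nat -> T) : ultrapower T U :=
  exist _ (uclass U a) (ex_intro _ a erefl).

Lemma sig_eq' A (P : A -> Prop) (x y : {a : A | P a}) :
  proj1_sig x = proj1_sig y -> x = y.
Proof. case: x => x px; case: y => y py /= E; subst; f_equal; apply: proof_irrelevance. Qed.

Lemma cls_surj d (T : orderType d) U (x : ultrapower T U) : exists a, x = cls U a.
Proof. case: x => S [a E]; exists a; apply: sig_eq' => /=; done. Qed.

Lemma cls_eq d (T : orderType d) U (a b : nat -> T) :
  is_ultrafilter U -> U (fun n => a n = b n) -> cls U a = cls U b.
Proof.
move=> hU H; apply: sig_eq' => /=; apply: functional_extensionality => c.
apply: propositional_extensionality; rewrite /uclass /useq_equiv; split => H2.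
  by apply: (U_up hU (U_int hU H H2)) => n [-> ->].
by apply: (U_up hU (U_int hU H H2)) => n [<- ->].
Qed.

Lemma le_cls d (T : orderType d) U (a b : nat -> T) :
  is_ultrafilter U -> ultrapower_le (cls U a) (cls U b) <-> U (fun n => a n <= b n).
Proof.
move=> hU; split; last by move=> H; exists a, b.
move=> [a' [b' [/= Ea [Eb H]]]].
have Ha : uclass U a' a by rewrite -Ea; apply: U_true hU _.
have Hb : uclass U b' b by rewrite -Eb; apply: U_true hU _.
apply: (U_up hU (U_int hU H (U_int hU Ha Hb))) => n [h [<- <-]]; done.
Qed.

Lemma U_false (U : (nat -> Prop) -> Prop) (K : nat -> Prop) :
  is_ultrafilter U -> U K -> (forall n, K n -> False) -> False.
Proof. move=> hU H F; apply: (U_const (P:=False) hU); exact: (U_up hU H). Qed.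

Lemma fin_const d (T : orderType d) U (l : list T) (a : nat -> T) :
  is_ultrafilter U -> U (fun n => List.In (a n) l) -> exists t, U (fun n => a n = t).
Proof.
move=> hU; elim: l => [|t l IH] H.
  by exfalso; apply: (U_false hU H).
case: (hU) => [_ [_ [_ [_ Ucomp]]]].
case: (Ucomp (fun n => a n = t)) => H2; first by exists t.
apply: IH; apply: (U_up hU (U_int hU H H2)) => n [[->|//] h]; done.
Qed.

Lemma max_in d (T : orderType d) (P : T -> Prop) (l : list T) :
  (exists t, List.In t l /\ P t) -> exists m, P m /\ forall t, List.In t l -> P t -> t <= m.
Proof.
elim: l => [|t l IH]; first by move=> [? []].
move=> Hex; case: (classic (exists t, List.In t l /\ P t)) => H.
  case: (IH H) => m [Pm Hm]; case: (classic (P t)) => Pt.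
    case: (leP t m) => htm.
      exists m; split => // x [<-|] //; exact: Hm.
    exists t; split => // x [<-|hx] // Px; apply: le_trans (Hm _ hx Px) (ltW htm).
  exists m; split => // x [<-|]; [done| exact: Hm].
case: (classic (P t)) => Pt.
  exists t; split => // x [<-|hx] // Px; exfalso; apply: H; by exists x.
exfalso; case: Hex => x [[<-|hx] Px] //; apply: H; by exists x.
Qed.

Lemma fin_complete d (T : orderType d) U :
  is_ultrafilter U -> finite_type T -> ultrapower_complete T U.
Proof.
move=> hU [l Hl] A [x0 Ax0] _.
have key: forall x : ultrapower T U, exists t, x = cls U (fun _ => t).
  move=> x; case: (cls_surj x) => a ->.
  case: (@fin_const d T U l a hU) => [|t Ht].
    by apply: U_true hU _ => n; exact: Hl.
  by exists t; apply: cls_eq.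
case: (@max_in d T (fun t => A (cls U (fun _ => t))) l) => [|m [Am Hm]].
  case: (key x0) => t E; exists t; split; first exact: Hl.
  by rewrite -E.
exists (cls U (fun _ => m)); split.
  move=> x Ax; case: (key x) => t E; subst x; apply/(le_cls _ _ hU).
  apply: U_true hU _ => n; apply: Hm => //; exact: Hl.
by move=> u Hu; exact: Hu.
Qed.

Lemma dep_choice (T : Type) (S : T -> Prop) (R : T -> T -> Prop) x0 :
  S x0 -> (forall x, S x -> exists y, S y /\ R x y) ->
  exists s : nat -> T, forall n, R (s n) (s n.+1).
Proof.
move=> S0 H.
pose g x := epsilon (inhabits x0) (fun y => S y /\ R x y).
have Hg : forall x, S x -> S (g x) /\ R x (g x).
  by move=> x Sx; exact: (epsilon_spec (inhabits x0) (fun y => S y /\ R x y) (H x Sx)).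
have HS : forall n, S (iter n g x0).
  by elim=> [|n IH] //=; case: (Hg _ IH).
exists (fun n => iter n g x0) => n /=; by case: (Hg _ (HS n)).
Qed.

Definition finP (T : Type) (P : T -> Prop) := exists l : list T, forall x, P x -> List.In x l.

Lemma fin3 (T : Type) (S A B C : T -> Prop) :
  finP A -> finP B -> finP C -> (forall x, S x -> A x \/ B x \/ C x) -> finP S.
Proof.
move=> [la Ha] [lb Hb] [lc Hc] H; exists (la ++ lb ++ lc)%list => x /H [h|[h|h]];
  apply/List.in_or_app; [left; exact: Ha| right; apply/List.in_or_app; left; exact: Hb
  | right; apply/List.in_or_app; right; exact: Hc].
Qed.

Lemma inf_seq d (T : orderType d) :
  inhabited T -> ~ finite_type T ->
  exists s : nat -> T, (forall n, s n < s n.+1) \/ (forall n, s n.+1 < s n).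
Proof.
move=> inh nfin.
case: (classic (exists S : T -> Prop, ~ finP S /\ forall y, S y -> finP (fun z => y < z))).
  move=> [S [infS HS]].
  have [x0 S0] : exists x, S x.
    apply: NNPP => nS; apply: infS; exists nil => x Sx; apply: nS; by exists x.
  have step : forall x : T, S x -> exists y : T, S y /\ y < x.
    move=> x Sx; apply: NNPP => nE; apply: infS.
    apply: (@fin3 T S (fun y => y = x) (fun _ => False) (fun z => x < z)).
    - by exists (x :: nil)%list => y ->; left.
    - by exists nil.
    - exact: HS.
    move=> y Sy; case: (ltgtP y x) => h.
    - by exfalso; apply: nE; exists y.
    - by right; right.
    - by left.
  case: (dep_choice S0 step) => s Hs; exists s; by right.
move=> nE.
have H : forall S : T -> Prop, ~ finP S -> exists y, S y /\ ~ finP (fun z => y < z).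
  move=> S infS; apply: NNPP => nE2; apply: nE; exists S; split => // y Sy.
  apply: NNPP => nf; apply: nE2; by exists y.
have [x0 [_ P0]] := H (fun _ => True) (fun '(ex_intro l hl) => nfin (ex_intro _ l (fun x => hl x I))).
have step : forall x : T, ~ finP (fun z => x < z) -> exists y : T, ~ finP (fun z => y < z) /\ x < y.
  move=> x Px; case: (H _ Px) => y [xy Py]; by exists y.
case: (@dep_choice T (fun x => ~ finP (fun z => x < z)) (fun x y => x < y) x0 P0 step) => s Hs; exists s; by left.
Qed.

Fixpoint jf (p : nat -> bool) (m : nat) : nat :=
  match m with 0 => 0 | m'.+1 => if p m'.+1 then m'.+1 else jf p m' end.

Lemma jf_ge (p : nat -> bool) i m : p i -> (i <= m)%N -> (i <= jf p m)%N.
Proof.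
move=> pi; elim: m => [|m IH] /=; first by rewrite leqn0 => /eqP ->.
case: ifP => // pm; rewrite leq_eqVlt => /orP [/eqP E|]; first by rewrite E pm in pi.
by rewrite ltnS; exact: IH.
Qed.

Lemma jf_p (p : nat -> bool) m : (0 < jf p m)%N -> p (jf p m).
Proof. elim: m => [|m IH] //=; case: ifP => //. Qed.

Lemma inc_le d (T : orderType d) (t : nat -> T) :
  (forall n, t n < t n.+1) -> forall k m, (k <= m)%N -> t k <= t m.
Proof.
move=> ht k; elim=> [|m IH]; first by rewrite leqn0 => /eqP ->.
rewrite leq_eqVlt => /orP [/eqP ->//|]; rewrite ltnS => /IH h.
exact: le_trans h (ltW (ht m)).
Qed.

Lemma dec_le d (T : orderType d) (t : nat -> T) :
  (forall n, t n.+1 < t n) -> forall k m, (k <= m)%N -> t m <= t k.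
Proof.
move=> ht k; elim=> [|m IH]; first by rewrite leqn0 => /eqP ->.
rewrite leq_eqVlt => /orP [/eqP ->//|]; rewrite ltnS => /IH h.
exact: le_trans (ltW (ht m)) h.
Qed.

Lemma inf_inc d (T : orderType d) U (t : nat -> T) :
  is_ultrafilter U -> (forall n, t n < t n.+1) -> ~ ultrapower_complete T U.
Proof.
move=> hU ht C.
have mono := inc_le ht.
case: (C (fun x => exists k, x = cls U (fun _ => t k))).
- by exists (cls U (fun _ => t 0)), 0.
- exists (cls U t) => x [k ->]; apply/(le_cls _ _ hU).
  apply: (U_up hU (U_cof k hU)) => n; exact: mono.
move=> l [lub1 lub2]; case: (cls_surj l) => b El; subst l.
have Hb : forall k, U (fun n => t k <= b n).
  by move=> k; apply/(le_cls _ _ hU); apply: lub1; exists k.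
have : ultrapower_le (cls U b) (cls U (fun n => t (jf (fun j => t j <= b n) n).-1)).
  apply: lub2 => x [k ->]; apply/(le_cls _ _ hU).
  apply: (U_up hU (U_int hU (Hb k.+1) (U_cof k.+1 hU))) => n [h1 h2].
  have hJ : (k.+1 <= jf (fun j => (t j <= b n)%O) n)%N by apply: jf_ge.
  apply: mono; by case: (jf _ n) hJ.
move/(le_cls _ _ hU) => Hbc.
apply: (U_false hU (U_int hU Hbc (U_int hU (Hb 1) (U_cof 1 hU)))) => n [h1 [h2 h3]].
have hJ : (1 <= jf (fun j => (t j <= b n)%O) n)%N by apply: jf_ge.
have pJ := jf_p hJ.
move: hJ pJ h1; case: (jf _ n) => [|j] // _ /= pj h1.
have := lt_le_trans (ht j) pj.
by rewrite ltNge h1.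
Qed.

Lemma inf_dec d (T : orderType d) U (s : nat -> T) :
  is_ultrafilter U -> (forall n, s n.+1 < s n) -> ~ ultrapower_complete T U.
Proof.
move=> hU hs C.
have mono := dec_le hs.
case: (C (fun x => forall k, ultrapower_le x (cls U (fun _ => s k)))).
- exists (cls U s) => k; apply/(le_cls _ _ hU).
  apply: (U_up hU (U_cof k hU)) => n; exact: mono.
- by exists (cls U (fun _ => s 0)) => x; apply.
move=> l [lub1 lub2]; case: (cls_surj l) => b El; subst l.
have Hb : forall k, U (fun n => b n <= s k).
  by move=> k; apply/(le_cls _ _ hU); apply: lub2 => x Ax; exact: Ax k.
have : ultrapower_le (cls U (fun n => s (jf (fun j => b n <= s j) n).-1)) (cls U b).
  apply: lub1 => k; apply/(le_cls _ _ hU).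
  apply: (U_up hU (U_int hU (Hb k.+1) (U_cof k.+1 hU))) => n [h1 h2].
  have hJ : (k.+1 <= jf (fun j => (b n <= s j)%O) n)%N by apply: jf_ge.
  apply: mono; by case: (jf _ n) hJ.
move/(le_cls _ _ hU) => Hbc.
apply: (U_false hU (U_int hU Hbc (U_int hU (Hb 1) (U_cof 1 hU)))) => n [h1 [h2 h3]].
have hJ : (1 <= jf (fun j => (b n <= s j)%O) n)%N by apply: jf_ge.
have pJ := jf_p hJ.
move: hJ pJ h1; case: (jf _ n) => [|j] // _ /= pj h1.
have := le_lt_trans pj (hs j).
by rewrite ltNge h1.
Qed.

Theorem mainTheorem6 (d : Order.disp_t) (T : orderType d)
  (U : (nat -> Prop) -> Prop) :
  inhabited T -> is_ultrafilter U ->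
  (ultrapower_complete T U <-> finite_type T).
Proof.
move=> inh hU; split; last exact: fin_complete.
move=> C; apply: NNPP => nfin.
case: (inf_seq inh nfin) => s [H|H]; [exact: inf_inc hU H C | exact: inf_dec hU H C].
Qed.
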